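(* Let $k>v_1$ and let $\varphi=(x(t),y(t))$ be the $k$-jet of an element of $\Sigma_\Gamma$. For $b\ne0$, the vector $(0,bt^k)$ belongs to $T_1$ (resp. $\widetilde T$) if and only if $k+v_0\in\Lambda^2_\varphi$ (resp. $k+v_0\in\Lambda'_\varphi$).
   Context: $\mathcal O_1=\mathbb C\{t\}$, $\mathcal O_2=\mathbb C\{X,Y\}$, with maximal ideals $\mathcal M_1,\mathcal M_2$; $\varphi^*(h)=h(x(t),y(t))$; $j^k$ denotes truncation modulo $t^{k+1}$, componentwise. $\Gamma$ is the semigroup of values of a plane branch with minimal generators $v_0<v_1<\cdots<v_g$ and conductor $c$; $\Sigma_\Gamma$ is the set of Puiseux parametrizations $(t^{v_0},t^{v_1}+\sum_{v_1<i<c}a_it^i)$ (primitive, $v_0\nmid v_1$) whose semigroup of values equals $\Gamma$. $T_1=\{j^k(x'\epsilon+\varphi^*(g),\ y'\epsilon+\varphi^*(h)):\epsilon\in\mathcal M_1^2,\ g,h\in\mathcal M_2^2\}$ and $\widetilde T$ is defined the same way but with $g\in\langle X^2,Y\rangle$, $h\in\mathcal M_2^2$ (tangent spaces to the $\mathcal A_1^k$- and $\widetilde{\mathcal A}^k$-orbits). For $\omega=h\,dX+g\,dY$ put $v_\varphi(\omega)=\mathrm{ord}_t(\varphi^*(h)x'(t)+\varphi^*(g)y'(t))+1$; $\Lambda^2_\varphi=\{v_\varphi(h\,dX+g\,dY): g,h\in\mathcal M_2^2\}$ and $\Lambda'_\varphi=\{v_\varphi(h\,dX+g\,dY): g\in\langle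 X^2,Y\rangle,\ h\in\mathcal M_2^2\}$ (only forms with nonzero pull-back considered). *)

(* Defs.v *)
From HB Require Import structures.
From mathcomp Require Import all_boot all_order all_algebra.
Set Implicit Arguments. Unset Strict Implicit. Unset Printing Implicit Defensive.
Import Order.TTheory GRing.Theory Num.Theory.
Local Open Scope ring_scope.

Section Defs.
Variable C : numClosedFieldType.

Definition ord (p : {poly C}) : nat := find (fun a => a != 0) (polyseq p).

Definition jet (k : nat) (p : {poly C}) : {poly C} := \poly_(i < k.+1) p`_i.

(* Bivariate polynomials h(X,Y) : {poly {poly C}}; outer variable is Y,
   inner variable is X. *)
Definition varX : {poly {poly C}} := ('X)%:P.
Definition varY : {poly {poly C}} := 'X.

Definition pullback (h : {poly {poly C}}) (x y : {poly C}) : {poly C} :=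
  (map_poly (fun q : {poly C} => q \Po x) h).[y].

Definition inM2sq (h : {poly {poly C}}) : Prop :=
  exists a b c, h = varX ^+ 2 * a + varX * varY * b + varY ^+ 2 * c.

Definition inX2Y (g : {poly {poly C}}) : Prop :=
  exists a b, g = varX ^+ 2 * a + varY * b.

Definition inM1sq (e : {poly C}) : Prop := exists a, e = 'X ^+ 2 * a.

Definition semigroup_of (x y : {poly C}) (n : nat) : Prop :=
  exists f : {poly {poly C}}, pullback f x y != 0 /\ ord (pullback f x y) = n.

Definition primitive (x y : {poly C}) : Prop :=
  ~ exists r : nat, (1 < r)%N /\
      (forall i, x`_i != 0 -> (r %| i)%N) /\ (forall i, y`_i != 0 -> (r %| i)%N).

(* Sigma_Gamma, with v the minimal generators and c the conductor of Gamma *)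
Definition in_Sigma (Gam : nat -> Prop) (v : seq nat) (c : nat)
    (x y : {poly C}) : Prop :=
  exists a : nat -> C,
    x = 'X ^+ (nth 0%N v 0) /\
    y = 'X ^+ (nth 0%N v 1) + \sum_((nth 0%N v 1).+1 <= i < c) a i *: 'X ^+ i /\
    primitive x y /\ ~~ (nth 0%N v 0 %| nth 0%N v 1)%N /\
    (forall n, semigroup_of x y n <-> Gam n).

Definition in_T1 (x y : {poly C}) (k : nat) (b : C) : Prop :=
  exists (e : {poly C}) (g h : {poly {poly C}}),
    inM1sq e /\ inM2sq g /\ inM2sq h /\
    jet k (x^`() * e + pullback g x y) = 0 /\
    jet k (y^`() * e + pullback h x y) = b *: 'X ^+ k.

Definition in_Ttilde (x y : {poly C}) (k : nat) (b : C) : Prop :=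
  exists (e : {poly C}) (g h : {poly {poly C}}),
    inM1sq e /\ inX2Y g /\ inM2sq h /\
    jet k (x^`() * e + pullback g x y) = 0 /\
    jet k (y^`() * e + pullback h x y) = b *: 'X ^+ k.

(* v_phi(h dX + g dY) *)
Definition vphi (x y : {poly C}) (h g : {poly {poly C}}) : {poly C} :=
  pullback h x y * x^`() + pullback g x y * y^`().

Definition in_Lambda2 (x y : {poly C}) (n : nat) : Prop :=
  exists g h, inM2sq g /\ inM2sq h /\ vphi x y h g != 0 /\
    n = (ord (vphi x y h g)).+1.

Definition in_Lambda' (x y : {poly C}) (n : nat) : Prop :=
  exists g h, inX2Y g /\ inM2sq h /\ vphi x y h g != 0 /\
    n = (ord (vphi x y h g)).+1.
End Defs.

Definition Ncomb (v : seq nat) (n : nat) : Prop :=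
  exists m : seq nat, size m = size v /\
    n = (\sum_(i < size v) nth 0%N m i * nth 0%N v i)%N.

Definition min_generators (Gam : nat -> Prop) (v : seq nat) : Prop :=
  sorted ltn v /\ (forall n, Gam n <-> Ncomb v n) /\
  (forall i, (i < size v)%N -> ~ Ncomb (take i v ++ drop i.+1 v) (nth 0%N v i)).

Definition conductor (Gam : nat -> Prop) (c : nat) : Prop :=
  (forall n, (c <= n)%N -> Gam n) /\
  (forall c', (forall n, (c' <= n)%N -> Gam n) -> (c <= c')%N).

(* Main.v *)
Require Import Defs.
From HB Require Import structures.
From mathcomp Require Import all_boot all_order all_algebra.
Import Order.TTheory GRing.Theory Num.Theory.
Local Open Scope ring_scope.

Definition compx (R: comNzRingType) (x: {poly R}) (p : {poly R}) := p \Po x.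
HB.instance Definition _ (R: comNzRingType) (x: {poly R}) :=
  GRing.isZmodMorphism.Build _ _ (@compx R x) (fun p q => comp_polyB p q x).
HB.instance Definition _ (R: comNzRingType) (x: {poly R}) :=
  GRing.isMonoidMorphism.Build _ _ (@compx R x)
    (conj (comp_polyC 1 x) (fun p q => comp_polyM p q x)).

Section H.
Variable C : numClosedFieldType.
Implicit Types (p q x y : {poly C}) (g h : {poly {poly C}}).

Lemma pbE h x y : pullback h x y = (map_poly (@compx C x) h).[y].
Proof. by []. Qed.
Lemma pbD g h x y : pullback (g + h) x y = pullback g x y + pullback h x y.
Proof. by rewrite !pbE rmorphD hornerD. Qed.
Lemma pbN g x y : pullback (- g) x y = - pullback g x y.
Proof. by rewrite !pbE rmorphN hornerN. Qed.
Lemma pbM g h x y : pullback (g * h) x y = pullback g x y * pullback h x y.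
Proof. by rewrite !pbE rmorphM hornerM. Qed.
Lemma pbX x y : pullback (varX C) x y = x.
Proof. rewrite pbE /varX map_polyC hornerC; exact: comp_polyX. Qed.
Lemma pbY x y : pullback (varY C) x y = y.
Proof. by rewrite pbE /varY map_polyX hornerX. Qed.
Lemma pbC (s : C) x y : pullback (s%:P%:P) x y = s%:P.
Proof. rewrite pbE map_polyC hornerC; exact: comp_polyC. Qed.
Lemma pbX2 x y : pullback (varX C ^+ 2) x y = x ^+ 2.
Proof. by rewrite expr2 pbM pbX -expr2. Qed.
Lemma pbY2 x y : pullback (varY C ^+ 2) x y = y ^+ 2.
Proof. by rewrite expr2 pbM pbY -expr2. Qed.

Lemma lowzP n p : (forall i, (i < n)%N -> p`_i = 0) -> exists q, p = 'X^n * q.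
Proof.
move=> H; exists (\poly_(i < size p) p`_(i + n)).
apply/polyP=> i; rewrite coefXnM coef_poly.
case: ltnP => [/H -> //|hin].
case: ltnP => hs; first by rewrite subnK.
by rewrite nth_default // (leq_trans hs) // leq_subr.
Qed.

Lemma ord_eq p n : (forall i, (i < n)%N -> p`_i = 0) -> p`_n != 0 -> ord p = n.
Proof.
move=> Hl Hn; rewrite /ord.
have hs : (n < size p)%N.
  by rewrite ltnNge; apply: contra Hn => H; rewrite nth_default.
have hh : has (fun a => a != 0) p by apply/(has_nthP 0); exists n.
case: (ltngtP (find (fun a : C => a != 0) p) n) => // h.
- by have := nth_find 0 hh; rewrite Hl // eqxx.
- by have := before_find 0 h; rewrite Hn.
Qed.

Lemma ord_spec p : p != 0 ->
  (forall i, (i < ord p)%N -> p`_i = 0) /\ p`_(ord p) != 0.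
Proof.
move=> p0; have hh : has (fun a => a != 0) p.
  apply/(has_nthP 0); exists (size p).-1.
    by rewrite ltn_predL size_poly_gt0.
  by rewrite -lead_coefE lead_coef_eq0.
split; last exact: (nth_find 0 hh).
by move=> i /(before_find 0) /negbFE /eqP.
Qed.

Lemma coefXn0 n q : ('X^n * q)`_n = q`_0.
Proof. by rewrite coefXnM ltnn subnn. Qed.

Lemma XnW_neq0 n q : q`_0 != 0 -> 'X^n * q != 0.
Proof.
move=> h; rewrite mulf_neq0 ?expf_neq0 ?polyX_eq0 //.
by apply: contra h => /eqP ->; rewrite coef0.
Qed.

Lemma ordXn n q : q`_0 != 0 -> ord ('X^n * q) = n.
Proof.
move=> h; apply: ord_eq; last by rewrite coefXn0.
by move=> i hi; rewrite coefXnM hi.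
Qed.

Lemma coef_jet k p i : (@jet C k p)`_i = if (i < k.+1)%N then p`_i else 0.
Proof. by rewrite coef_poly. Qed.

Lemma jetXk k (W : {poly C}) : jet k ('X^k * W) = W`_0 *: 'X^k.
Proof.
apply/polyP=> i; rewrite coef_jet coefXnM coefZ coefXn.
case: (ltngtP i k) => h.
- by rewrite ltnS ltnW // mulr0.
- by rewrite ltnS leqNgt h mulr0.
- by rewrite h ltnSn subnn mulr1.
Qed.

Lemma M2_X2Y g : inM2sq g -> inX2Y g.
Proof.
case=> a [b [c ->]]; exists a, (varX C * b + varY C * c).
by rewrite mulrDr !mulrA addrA [varX C * varY C]mulrC expr2.
Qed.

Lemma X2Y_scale (s : C) g : inX2Y g -> inX2Y (s%:P%:P * g).
Proof.
case=> a [b ->]; exists (s%:P%:P * a), (s%:P%:P * b).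
by rewrite mulrDr (mulrCA (s%:P%:P) (varX C ^+ 2)) (mulrCA (s%:P%:P) (varY C)).
Qed.

Lemma M2_scale (s : C) g : inM2sq g -> inM2sq (s%:P%:P * g).
Proof.
case=> a [b [c ->]]; exists (s%:P%:P * a), (s%:P%:P * b), (s%:P%:P * c).
rewrite !mulrDr (mulrCA (s%:P%:P) (varX C ^+ 2)) (mulrCA (s%:P%:P) (varY C ^+ 2)).
by rewrite (mulrCA (s%:P%:P) (varX C * varY C)).
Qed.

Lemma X2Y_opp g : inX2Y g -> inX2Y (- g).
Proof. by case=> a [b ->]; exists (- a), (- b); rewrite opprD -!mulrN. Qed.

Lemma M2_opp g : inM2sq g -> inM2sq (- g).
Proof.
by case=> a [b [c ->]]; exists (- a), (- b), (- c); rewrite !opprD -!mulrN.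
Qed.

End H.
Section H2.
Variable C : numClosedFieldType.
Implicit Types (p q x y : {poly C}) (g h : {poly {poly C}}).

Lemma pb_X2Y (v0 : nat) x y (Y1 : {poly C}) g : (0 < v0)%N -> x = 'X^v0 -> y = 'X^(v0.+1) * Y1 ->
  inX2Y g -> exists G, pullback g x y = 'X^(v0.+1) * G.
Proof.
move=> v0p hx hy [a [b ->]].
exists ('X^(v0.-1) * pullback a x y + Y1 * pullback b x y).
rewrite pbD !pbM pbX pbY -expr2 mulrDr !mulrA -exprD hx -exprM hy.
congr (_ * _ + _); congr ('X^_).
by rewrite addSn -addnS prednK // muln2 addnn.
Qed.

Lemma fwd (v0 k : nat) x y (D e : {poly C}) g h (b : C) : (0 < v0)%N -> x = 'X^v0 ->
  y^`() = 'X^v0 * D -> b != 0 ->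
  jet k (x^`() * e + pullback g x y) = 0 ->
  jet k (y^`() * e + pullback h x y) = b *: 'X^k ->
  vphi x y h (- g) != 0 /\ (k + v0 = (ord (vphi x y h (- g))).+1)%N.
Proof.
move=> v0p hx hdy b0 HA HB.
have hdx : x^`() = v0%:R *: 'X^(v0.-1) by rewrite hx derivXn scaler_nat.
set A := x^`() * e + pullback g x y in HA.
set B := y^`() * e + pullback h x y in HB.
have [A2 eA] : exists A2, A = 'X^(k.+1) * A2.
  apply: lowzP => i hi; move/(congr1 (fun p => p`_i)): HA.
  by rewrite coef_jet hi coef0.
have [B1 eB] : exists B1, B = 'X^k * B1.
  apply: lowzP => i hi; move/(congr1 (fun p => p`_i)): HB.
  by rewrite coef_jet ltnS ltnW // coefZ coefXn ltn_eqF // mulr0.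
have B10 : B1`_0 = b.
  move/(congr1 (fun p => p`_k)): HB.
  by rewrite coef_jet ltnSn eB coefXn0 coefZ coefXn eqxx mulr1.
have ePh : pullback h x y = B - y^`() * e by rewrite /B addrAC subrr add0r.
have ePg : pullback g x y = A - x^`() * e by rewrite /A addrAC subrr add0r.
set W := v0%:R *: B1 - 'X^2 * (A2 * D).
have eV : vphi x y h (- g) = 'X^(v0.-1 + k) * W.
  rewrite /vphi pbN ePh ePg.
  have -> : (B - y^`() * e) * x^`() + - (A - x^`() * e) * y^`() =
            B * x^`() - A * y^`().
    rewrite mulrBl mulNr mulrBl opprB.
    rewrite [x^`() * e * y^`()]mulrC mulrA.
    by rewrite addrA [y^`() * e * x^`()]mulrAC subrK.
  rewrite eA eB hdx hdy /W mulrBr; congr (_ - _).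
    by rewrite -scalerAr -scalerAr mulrAC -exprD addnC.
  rewrite mulrA [_ * A2 * _]mulrAC -exprD -mulrA ['X^(v0.-1 + k) * _]mulrA -exprD.
  congr (_ * _); congr ('X^_).
  by rewrite -{1}(prednK v0p) addSn addnS addn2 addnC.
have W0 : W`_0 != 0.
  rewrite /W coefB coefZ B10 coefXnM /= subr0 mulf_neq0 //.
  by rewrite pnatr_eq0 -lt0n.
split; first by rewrite eV XnW_neq0.
by rewrite eV ordXn // -addSn prednK // addnC.
Qed.


Lemma jet0 k : jet k (0 : {poly C}) = 0.
Proof. by apply/polyP => i; rewrite coef_jet coef0 if_same. Qed.

Lemma bwd (v0 k : nat) x y (G : {poly C}) g h (b : C) : (0 < v0)%N ->
  x = 'X^v0 -> pullback g x y = 'X^(v0.+1) * G -> b != 0 ->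
  vphi x y h g != 0 -> (k + v0 = (ord (vphi x y h g)).+1)%N ->
  exists (s : C) (e : {poly C}), inM1sq e /\
    jet k (x^`() * e + pullback ((- s)%:P%:P * g) x y) = 0 /\
    jet k (y^`() * e + pullback (s%:P%:P * h) x y) = b *: 'X^k.
Proof.
move=> v0p hx hPg b0 V0 hord.
set V := vphi x y h g in V0 hord.
have [Vl Vn] := @ord_spec C V V0.
have ordV : ord V = (v0.-1 + k)%N.
  move: hord; rewrite -(prednK v0p) addnS => /eqP; rewrite eqSS => /eqP <-.
  by rewrite addnC.
have [W eW] : exists W, V = 'X^(v0.-1 + k) * W by apply: lowzP; rewrite -ordV.
have c0 : W`_0 != 0 by move: Vn; rewrite ordV eW coefXn0.
have hdx : x^`() = v0%:R *: 'X^(v0.-1) by rewrite hx derivXn scaler_nat.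
have ePg : pullback g x y = 'X^(v0.-1) * ('X^2 * G).
  by rewrite mulrA -exprD addn2 prednK.
have eQ : pullback h x y *+ v0 + 'X^2 * G * y^`() = 'X^k * W.
  apply: (@mulfI _ ('X^(v0.-1))); first by rewrite expf_neq0 ?polyX_eq0.
  have hdx' : x^`() = 'X^(v0.-1) *+ v0 by rewrite hx derivXn.
  rewrite mulrA -exprD -eW /V /vphi hdx' ePg mulrDr !mulrnAr mulrC.
  by rewrite [_ * ('X^2 * G * _)]mulrA.
set s := b / W`_0.
exists (s * v0%:R), (s *: ('X^2 * G)); split; first by exists (s *: G); rewrite scalerAr.
split.
  rewrite pbM pbC mul_polyC hdx ePg -scalerAl -scalerAr scalerA scaleNr.
  by rewrite [v0%:R * s]mulrC subrr jet0.
have -> : y^`() * (s *: ('X^2 * G)) + pullback ((s * v0%:R)%:P%:P * h) x y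
    = s *: ('X^k * W).
  rewrite pbM pbC mul_polyC -eQ scalerDr addrC.
  congr (_ + _); first by rewrite -scalerA scaler_nat.
  by rewrite -scalerAr mulrC.
by rewrite scalerAr jetXk coefZ /s divfK.
Qed.

End H2.
Theorem proposition3p3 (C : numClosedFieldType) (Gam : nat -> Prop)
    (v : seq nat) (c : nat) (psix psiy : {poly C}) (k : nat) (b : C) :
  min_generators Gam v -> (1 < size v)%N -> conductor Gam c ->
  in_Sigma Gam v c psix psiy ->
  (nth 0%N v 1 < k)%N -> b != 0 ->
  let x := jet k psix in let y := jet k psiy in
  (in_T1 x y k b <-> in_Lambda2 x y (k + nth 0%N v 0)%N) /\
  (in_Ttilde x y k b <-> in_Lambda' x y (k + nth 0%N v 0)%N).
Proof.
move=> [Hsort [_ Hmin]] Hsz _ [a [hpx [hpy _]]] hv1k b0 x y.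
have hv01 : (nth 0%N v 0 < nth 0%N v 1)%N.
  by move: Hsort Hsz; case: v {Hmin hpx hpy hv1k x y} => [|a0 [|a1 s]] //= /andP[].
have v0p : (0 < nth 0%N v 0)%N.
  rewrite lt0n; apply/eqP => h0; apply: (Hmin 0%N (ltnW Hsz)); rewrite h0.
  exists (nseq (size (take 0 v ++ drop 1 v)) 0%N); split; first by rewrite size_nseq.
  by rewrite big1 // => i _; rewrite nth_nseq if_same mul0n.
have hx : x = 'X^(nth 0%N v 0).
  apply/polyP => i; rewrite /x coef_jet hpx.
  case: ltnP => // hi; rewrite coefXn gtn_eqF //.
  by apply: ltn_trans hv01 (ltn_trans hv1k hi).
have ylow : forall i, (i < nth 0%N v 1)%N -> y`_i = 0.
  move=> i hi; rewrite /y coef_jet; case: ifP => // _.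
  rewrite hpy coefD coefXn ltn_eqF // add0r coef_sum big_nat_cond big1 // => j.
  move=> /andP[/andP[hj _] _]; rewrite coefZ coefXn ltn_eqF ?mulr0 //.
  exact: ltn_trans hi hj.
have [Y1 hy] : exists Y1, y = 'X^((nth 0%N v 0).+1) * Y1.
  by apply: lowzP => i hi; apply: ylow; apply: leq_trans hi hv01.
have [D hdy] : exists D, y^`() = 'X^(nth 0%N v 0) * D.
  apply: lowzP => i hi; rewrite coef_deriv ylow ?mul0rn //.
  exact: leq_ltn_trans hi hv01.
split; split.
- case=> e [g [h [_ [Hg [Hh [HA HB]]]]]].
  have [V0 hk] := @fwd C _ _ _ _ _ _ _ _ _ v0p hx hdy b0 HA HB.
  by exists (- g), h; split; [exact: (@M2_opp C)|split].
- case=> g [h [Hg [Hh [V0 hk]]]].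
  have [G hG] := @pb_X2Y C _ _ _ _ _ v0p hx hy (@M2_X2Y C g Hg).
  have [s [e [He [HA HB]]]] := @bwd C _ _ _ _ _ _ _ _ v0p hx hG b0 V0 hk.
  exists e, ((- s)%:P%:P * g), (s%:P%:P * h).
  by split; [|split; [exact: (@M2_scale C)|split; [exact: (@M2_scale C)|]]].
- case=> e [g [h [_ [Hg [Hh [HA HB]]]]]].
  have [V0 hk] := @fwd C _ _ _ _ _ _ _ _ _ v0p hx hdy b0 HA HB.
  by exists (- g), h; split; [exact: (@X2Y_opp C)|split].
- case=> g [h [Hg [Hh [V0 hk]]]].
  have [G hG] := @pb_X2Y C _ _ _ _ _ v0p hx hy Hg.
  have [s [e [He [HA HB]]]] := @bwd C _ _ _ _ _ _ _ _ v0p hx hG b0 V0 hk.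
  exists e, ((- s)%:P%:P * g), (s%:P%:P * h).
  by split; [|split; [exact: (@X2Y_scale C)|split; [exact: (@M2_scale C)|]]].
Qed.
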